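(* Let $n\ge 2$ and let $O_n$ be the Cuntz algebra generated by isometries $S_1,\dots,S_n$ with $\sum_{i=1}^n S_iS_i^* = 1$. Let $\phi_n$ be the unique state on $O_n$ with $\phi_n(ab)=\phi_n(ba)$ for all $a\in O_n$, $b\in F_n$. Let $\Phi_n(x)=\sum_{i=1}^n S_i x S_i^*$ and $\Psi_n(x) = \frac1n\sum_{i=1}^n S_i^* x S_i$ for $x\in O_n$. Then (i) $\phi_n\circ\Phi_n = \phi_n$; and (ii) $\Psi_n$ is the adjoint of $\Phi_n$ with respect to $\phi_n$, i.e. $\phi_n(y^*\Phi_n(x)) = \phi_n(\Psi_n(y)^* x)$ for all $x,y\in O_n$.
   Context: For a multi-index $\mu=(\mu_1,\dots,\mu_k)\in\{1,\dots,n\}^k$, $S_\mu = S_{\mu_1}\cdots S_{\mu_k}$ ($S_\emptyset=1$). $F_n$ is the norm closure of the span of all $S_\mu S_\nu^*$ with $|\mu|=|\nu|$ (the canonical UHF subalgebra of type $n^\infty$). The state $\phi_n$ extending the unique trace of $F_n$ with the stated property exists and is unique. *)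

(* Defs.v *)
From HB Require Import structures.
From mathcomp Require Import all_boot all_order all_algebra.
From mathcomp Require Import reals complex.
Set Implicit Arguments. Unset Strict Implicit. Unset Printing Implicit Defensive.
Import Order.TTheory GRing.Theory Num.Theory.
Local Open Scope ring_scope.

Section CStar.
Variable R : realType.
Local Notation C := (complex R).
Variable A : algType C.
Variable star : A -> A.
Variable nrm : A -> C.

(* A unital C*-algebra over C: a complete normed unital *-algebra with the
   C*-identity.  The norm takes values in C but is required to be >= 0 (so it
   is real). *)
Record is_cstar_algebra : Prop := CStarAlgebra {
  star_add  : forall a b, star (a + b) = star a + star b;
  star_scale : forall (c : C) a, star (c *: a) = Num.conj c *: star a;
  star_mul  : forall a b, star (a * b) = star b * star a;
  star_invol : forall a, star (star a) = a;
  nrm_ge0   : forall a, 0 <= nrm a;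
  nrm_eq0   : forall a, nrm a = 0 -> a = 0;
  nrm_scale : forall (c : C) a, nrm (c *: a) = `|c| * nrm a;
  nrm_triangle : forall a b, nrm (a + b) <= nrm a + nrm b;
  nrm_submul : forall a b, nrm (a * b) <= nrm a * nrm b;
  nrm_cstar : forall a, nrm (star a * a) = nrm a ^+ 2;
  nrm_complete : forall u : nat -> A,
    (forall e : C, 0 < e -> exists N, forall m k, (N <= m)%N -> (N <= k)%N ->
        nrm (u m - u k) < e) ->
    exists l, forall e : C, 0 < e -> exists N, forall m, (N <= m)%N ->
        nrm (u m - l) < e
}.

Definition nclosure (P : A -> Prop) (a : A) : Prop :=
  forall e : C, 0 < e -> exists b, P b /\ nrm (a - b) < e.

Inductive star_subalg_gen (I : Type) (S : I -> A) : A -> Prop :=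
| ssg_gen  : forall i, star_subalg_gen S (S i)
| ssg_one  : star_subalg_gen S 1
| ssg_add  : forall a b, star_subalg_gen S a -> star_subalg_gen S b ->
               star_subalg_gen S (a + b)
| ssg_scale : forall (c : C) a, star_subalg_gen S a -> star_subalg_gen S (c *: a)
| ssg_mul  : forall a b, star_subalg_gen S a -> star_subalg_gen S b ->
               star_subalg_gen S (a * b)
| ssg_star : forall a, star_subalg_gen S a -> star_subalg_gen S (star a).

Definition cstar_generated_by (I : Type) (S : I -> A) : Prop :=
  forall a, nclosure (star_subalg_gen S) a.

Inductive span (P : A -> Prop) : A -> Prop :=
| span0 : span P 0
| spanS : forall (c : C) w x, P w -> span P x -> span P (c *: w + x).

Definition Sword (n : nat) (S : 'I_n -> A) (mu : seq 'I_n) : A :=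
  \prod_(i <- mu) S i.

Definition Fn_elem (n : nat) (S : 'I_n -> A) (a : A) : Prop :=
  exists mu nu : seq 'I_n, size mu = size nu /\ a = Sword S mu * star (Sword S nu).
Definition in_Fn (n : nat) (S : 'I_n -> A) : A -> Prop :=
  nclosure (span (Fn_elem S)).

Record is_state (phi : A -> C) : Prop := State {
  state_add : forall a b, phi (a + b) = phi a + phi b;
  state_scale : forall (c : C) a, phi (c *: a) = c * phi a;
  state_pos : forall a, 0 <= phi (star a * a);
  state_one : phi 1 = 1
}.

Definition PhiN (n : nat) (S : 'I_n -> A) (x : A) : A :=
  \sum_(i < n) S i * x * star (S i).
Definition PsiN (n : nat) (S : 'I_n -> A) (x : A) : A :=
  (n%:R)^-1 *: \sum_(i < n) star (S i) * x * S i.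

End CStar.

(* Main.v *)
Require Import Defs.
From HB Require Import structures.
From mathcomp Require Import all_boot all_order all_algebra.
From mathcomp Require Import reals complex.
From mathcomp Require Import ring lra.
Set Implicit Arguments. Unset Strict Implicit. Unset Printing Implicit Defensive.
Import Order.TTheory GRing.Theory Num.Theory.
Local Open Scope ring_scope.

Section Main.
Variable R : realType.
Local Notation C := (complex R).
Variable A : algType C.
Variable st : A -> A.
Variable nrm : A -> C.
Hypothesis HA : is_cstar_algebra st nrm.
Variable n : nat.
Hypothesis hn : (2 <= n)%N.
Variable S : 'I_n -> A.
Hypothesis Hiso : forall i, st (S i) * S i = 1.
Hypothesis Hsum : \sum_(i < n) S i * st (S i) = 1.
Variable phi : A -> C.
Hypothesis Hphi : is_state st phi.
Hypothesis Htr : forall a b, in_Fn st nrm S b -> phi (a * b) = phi (b * a).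


Lemma stD a b : st (a + b) = st a + st b. Proof. exact: (star_add HA a b). Qed.
Lemma stZ c a : st (c *: a) = c^* *: st a. Proof. exact: (star_scale HA c a). Qed.
Lemma stM a b : st (a * b) = st b * st a. Proof. exact: (star_mul HA a b). Qed.
Lemma stK a : st (st a) = a. Proof. exact: (star_invol HA a). Qed.
Lemma st0 : st 0 = 0.
Proof. have h := stD 0 0; rewrite addr0 in h. by apply: (addrI (st 0)); rewrite -h addr0. Qed.
Lemma stN a : st (- a) = - st a.
Proof. by apply: (addrI (st a)); rewrite -stD !subrr st0. Qed.
Lemma stB a b : st (a - b) = st a - st b.
Proof. by rewrite stD stN. Qed.
Lemma st1 : st 1 = 1.
Proof. have := stM (st 1) 1; rewrite mulr1 !stK mulr1; move=> h; exact: esym h. Qed.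
Lemma st_sum (I : Type) (r : seq I) (F : I -> A) :
  st (\sum_(i <- r) F i) = \sum_(i <- r) st (F i).
Proof. elim: r => [|x r IH]; by rewrite ?big_nil ?st0 // !big_cons stD IH. Qed.

Lemma phiD a b : phi (a + b) = phi a + phi b. Proof. exact: (state_add Hphi a b). Qed.
Lemma phiZ c a : phi (c *: a) = c * phi a. Proof. exact: (state_scale Hphi c a). Qed.
Lemma phi_pos a : 0 <= phi (st a * a). Proof. exact: (state_pos Hphi a). Qed.
Lemma phi1 : phi 1 = 1. Proof. exact: (state_one Hphi). Qed.
Lemma phi0 : phi 0 = 0.
Proof. have h := phiD 0 0; rewrite addr0 in h. by apply: (addrI (phi 0)); rewrite -h addr0. Qed.
Lemma phiN a : phi (- a) = - phi a.
Proof. by apply: (addrI (phi a)); rewrite -phiD !subrr phi0. Qed.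
Lemma phiB a b : phi (a - b) = phi a - phi b.
Proof. by rewrite phiD phiN. Qed.
Lemma phi_sum (I : Type) (r : seq I) (F : I -> A) :
  phi (\sum_(i <- r) F i) = \sum_(i <- r) phi (F i).
Proof. elim: r => [|x r IH]; by rewrite ?big_nil ?phi0 // !big_cons phiD IH. Qed.

Lemma phi_real a : phi (st a * a) \is Num.real.
Proof. exact: ger0_real (phi_pos a). Qed.

Lemma phi_st a : phi (st a) = (phi a)^*.
Proof.
set p := phi a; set q := phi (st a).
have E1 : st (a + 1) * (a + 1) = st a * a + (st a + a) + 1.
  by rewrite stD st1 mulrDl !mulrDr !mulr1 !mul1r !addrA.
have E2 : st (a + 'i *: 1) * (a + 'i *: 1) =
          st a * a + ('i *: st a - 'i *: a) + 1.
  rewrite stD stZ st1 conjCi mulrDl !mulrDr.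
  rewrite -!scalerAl -!scalerAr !mul1r !mulr1 scalerA.
  by rewrite mulNr -expr2 sqrCi opprK scale1r scaleNr !addrA.
have r1 := phi_real (a + 1); rewrite E1 !phiD phi1 in r1.
have r2 := phi_real (a + 'i *: 1); rewrite E2 !phiD !phiN !phiZ phi1 in r2.
have h1 : q + p \is Num.real.
  have -> : q + p = (phi (st a * a) + (q + p) + 1) - phi (st a * a) - 1 by ring.
  by apply: rpredB; [apply: rpredB|apply: rpred1] => //; exact: phi_real.
have h2 : 'i * q - 'i * p \is Num.real.
  have -> : 'i * q - 'i * p = (phi (st a * a) + ('i * q - 'i * p) + 1) - phi (st a * a) - 1 by ring.
  by apply: rpredB; [apply: rpredB|apply: rpred1] => //; exact: phi_real.
move/CrealP: h1; move/CrealP: h2; rewrite !rmorphB !rmorphD !rmorphM /= conjCi => h2 h1.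
have hi : 'i != 0 :> C by rewrite -normr_eq0 normCi oner_eq0.
have h3 : q^* - p^* = p - q.
  apply: (mulfI hi).
  have -> : 'i * (q^* - p^*) = - ((- 'i) * q^* - (- 'i) * p^*) by ring.
  rewrite h2; ring.
have h4 : (q - p^*) * 2 = 0.
  have -> : (q - p^*) * 2 = ((q + p) - (q^* + p^*)) - ((p - q) - (q^* - p^*)) by ring.
  by rewrite h1 h3 !subrr.
apply/eqP; rewrite -subr_eq0; apply/eqP.
by move/eqP: h4; rewrite mulf_eq0 pnatr_eq0 orbF => /eqP.
Qed.

Lemma quad u v (s : C) : s \is Num.real ->
  0 <= phi (st v * v) - (s * 2) * (phi (st u * v) * (phi (st u * v))^*)
       + (s ^+ 2 * phi (st u * u)) * (phi (st u * v) * (phi (st u * v))^*).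
Proof.
move=> sr.
set z := phi (st u * v).
set t := - (s * z).
have E : st (v + t *: u) * (v + t *: u) = st v * v + t *: (st v * u)
   + (t^* *: (st u * v) + (t^* * t) *: (st u * u)).
  rewrite stD stZ mulrDl !mulrDr -!scalerAl -!scalerAr scalerA !addrA.
  by rewrite (mulrC t^*).
have := phi_pos (v + t *: u); rewrite E !phiD !phiZ.
have -> : phi (st v * u) = z^* by rewrite -[st v * u]stK stM stK phi_st.
rewrite /t rmorphN rmorphM /= (conj_Creal sr).
set V := phi (st v * v); set Au := phi (st u * u).
have -> : V + - (s * z) * z^* + (- (s * z^*) * z + - (s * z^*) * - (s * z) * Au)
  = V - s * 2 * (z * z^*) + s ^+ 2 * Au * (z * z^*) by ring.
by [].
Qed.

Lemma CS u v : 0 < phi (st u * u) ->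
  phi (st u * v) * (phi (st u * v))^* <= phi (st u * u) * phi (st v * v).
Proof.
move=> Ap.
have Ar : phi (st u * u) \is Num.real := phi_real u.
set Au := phi (st u * u) in Ap Ar *; set N := _ * _^*; set V := phi _.
have Au0 : Au != 0 by rewrite gt_eqF.
have sr : Au^-1 \is Num.real by rewrite rpredV.
have := quad u v sr.
rewrite -/Au -/V -/N.
have -> : V - Au^-1 * 2 * N + Au^-1 ^+ 2 * Au * N = Au^-1 * (Au * V - N).
  by field.
by rewrite pmulr_rge0 ?invr_gt0 // subr_ge0.
Qed.

Lemma CS0 u v : phi (st v * v) = 0 -> phi (st u * v) = 0.
Proof.
move=> V0.
have Ag : 0 <= phi (st u * u) := phi_pos u.
set Au := phi (st u * u) in Ag *.
have A1 : 0 < Au + 1 by apply: ltr_wpDl Ag ltr01.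
set s := (Au + 1)^-1.
have sp : 0 < s by rewrite invr_gt0.
have sA : s * Au < 1 by rewrite mulrC ltr_pdivrMr // mul1r ltrDl ltr01.
have c0 : s * (s * Au - 2) < 0.
  by rewrite pmulr_rlt0 // subr_lt0 (lt_trans sA) // ltr1n.
have := quad u v (gtr0_real sp); rewrite V0 -/Au.
set N := _ * _^*.
have -> : 0 - s * 2 * N + s ^+ 2 * Au * N = N * (s * (s * Au - 2)) by ring.
rewrite nmulr_lge0 // => HN.
have : N = 0 by apply: le_anti; rewrite HN mul_conjC_ge0.
by move/eqP; rewrite mul_conjC_eq0 => /eqP.
Qed.

Lemma archC (e : C) : 0 < e -> exists N : nat, (2^-1)^+N < e.
Proof.
move=> he.
have Ie := ger0_Im (ltW he).
set r := complex.Re e.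
have Ee : e = (r%:C)%C by rewrite {1}[e]complexE Ie mulr0 addr0.
have rp : 0 < r by rewrite -(@ltcR R) -Ee.
have rip : 0 <= r^-1 by rewrite invr_ge0 ltW.
have hb := @archi_boundP R (r^-1) rip.
exists (Num.Def.archi_bound r^-1).
set N := Num.Def.archi_bound r^-1 in hb *.
have h2 : (2^-1 : C)^+N = (((2^-1)^+N : R)%:C)%C.
  by rewrite rmorphXn /= fmorphV rmorph_nat.
rewrite h2 Ee ltcR.
have hN : (N%:R : R) < 2 ^+ N.
  by rewrite -natrX ltr_nat ltn_expl.
rewrite exprVn -(invrK r) ltf_pV2 ?posrE ?exprn_gt0 ?invr_gt0 //.
exact: lt_trans hb hN.
Qed.

Lemma small0 (x : C) : 0 <= x -> (forall m, x <= (2^-1)^+m) -> x = 0.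
Proof.
move=> x0 hx; have [//|xn0] := eqVneq x 0.
have xp : 0 < x by rewrite lt_def xn0.
case: (archC xp) => N hN; have := lt_le_trans hN (hx N); by rewrite ltxx.
Qed.

Local Notation Sw mu := (Sword S mu).
Definition M (al : seq 'I_n) (y : A) := Sw al * y * st (Sw al).

Lemma Sw_nil : Sw [::] = 1. Proof. by rewrite /Sword big_nil. Qed.
Lemma Sw_cons i mu : Sw (i :: mu) = S i * Sw mu. Proof. by rewrite /Sword big_cons. Qed.
Lemma Sw_cat mu nu : Sw (mu ++ nu) = Sw mu * Sw nu. Proof. by rewrite /Sword big_cat. Qed.
Lemma Sw1 i : Sw [:: i] = S i. Proof. by rewrite Sw_cons Sw_nil mulr1. Qed.
Lemma stSw_cat mu nu : st (Sw (mu ++ nu)) = st (Sw nu) * st (Sw mu).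
Proof. by rewrite Sw_cat stM. Qed.
Lemma SwK mu : st (Sw mu) * Sw mu = 1.
Proof.
elim: mu => [|i mu IH]; first by rewrite Sw_nil st1 mulr1.
by rewrite Sw_cons stM -mulrA (mulrA (st (S i))) Hiso mul1r IH.
Qed.

Lemma nrm0 : nrm 0 = 0.
Proof. by have := nrm_scale HA 0 0; rewrite scale0r normr0 mul0r. Qed.

Lemma Fn_in mu nu : size mu = size nu -> in_Fn st nrm S (Sw mu * st (Sw nu)).
Proof.
move=> hs e he; exists (Sw mu * st (Sw nu)); split; last by rewrite subrr nrm0.
rewrite -[X in Defs.span _ X]scale1r -[X in Defs.span _ X]addr0.
apply: spanS; last exact: span0.
by exists mu, nu.
Qed.

Lemma trW mu nu a : size mu = size nu ->
  phi (a * (Sw mu * st (Sw nu))) = phi ((Sw mu * st (Sw nu)) * a).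
Proof. by move=> hs; apply: Htr; apply: Fn_in. Qed.

Lemma zeroZ i j u v : i != j -> phi (u * (st (S i) * S j) * v) = 0.
Proof.
move=> ij.
pose F k := phi (st v * st (S j) * (S k * st (S k)) * (S j * v)).
have Fk : forall k, F k = phi (st (st (S k) * S j * v) * (st (S k) * S j * v)).
  by move=> k; rewrite /F !stM stK !mulrA.
have Fpos : forall k, 0 <= F k by move=> k; rewrite Fk phi_pos.
have Fj : F j = phi (st v * v).
  rewrite /F; have -> : st v * st (S j) * (S j * st (S j)) * (S j * v) =
     st v * (st (S j) * S j) * (st (S j) * S j) * v by rewrite !mulrA.
  by rewrite Hiso !mulr1.
have Fs : \sum_k F k = phi (st v * v).
  rewrite /F -phi_sum -mulr_suml -mulr_sumr Hsum mulr1.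
  by rewrite -mulrA (mulrA (st (S j))) Hiso mul1r.
have F0 : \sum_(k | k != j) F k = 0.
  move: Fs; rewrite (bigD1 j) //= Fj => h; apply: (addrI (phi (st v * v))); by rewrite h addr0.
have := psumr_eq0P (fun k _ => Fpos k) F0 ij.
rewrite Fk => hw.
have := CS0 (st u) hw; rewrite stK !mulrA => h; exact: h.
Qed.

Lemma M_cat al be y : M (al ++ be) y = M al (M be y).
Proof. by rewrite /M Sw_cat stM !mulrA. Qed.
Lemma M_nil y : M [::] y = y.
Proof. by rewrite /M Sw_nil st1 mul1r mulr1. Qed.
Lemma M1 i y : M [:: i] y = S i * y * st (S i).
Proof. by rewrite /M Sw1. Qed.
Lemma M_sum al (I : Type) (r : seq I) (F : I -> A) :
  M al (\sum_(i <- r) F i) = \sum_(i <- r) M al (F i).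
Proof. by rewrite /M mulr_sumr mulr_suml. Qed.
Lemma MD al x y : M al (x + y) = M al x + M al y.
Proof. by rewrite /M mulrDr mulrDl. Qed.
Lemma MZ al c x : M al (c *: x) = c *: M al x.
Proof. by rewrite /M -scalerAr -scalerAl. Qed.

Lemma G0 al a b y : a != b -> phi (M al (S a * y * st (S b))) = 0.
Proof.
move=> ab.
set B := Sw (al ++ [:: a]) * st (Sw (al ++ [:: b])).
set Y := Sw (al ++ [:: b]) * y * st (Sw (al ++ [:: b])).
have E : M al (S a * y * st (S b)) = B * Y.
  rewrite /B /Y !mulrA -(mulrA _ _ (Sw (al ++ [:: b]))) SwK mulr1.
  by rewrite /M !Sw_cat !stM !Sw1 !mulrA.
rewrite E -trW ?size_cat //.
rewrite /Y /B.
have -> : Sw (al ++ [:: b]) * y * st (Sw (al ++ [:: b])) *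
    (Sw (al ++ [:: a]) * st (Sw (al ++ [:: b]))) =
    (Sw (al ++ [:: b]) * y) * (st (S b) * (st (Sw al) * Sw al) * S a) * st (Sw (al ++ [:: b])).
  by rewrite !Sw_cat !stM !Sw1 !mulrA.
by rewrite SwK mulr1 zeroZ // eq_sym.
Qed.

Lemma Msize al be y : size al = size be -> phi (M al y) = phi (M be y).
Proof.
move=> hs.
have := trW (Sw be * y * st (Sw al)) hs.
have -> : Sw be * y * st (Sw al) * (Sw al * st (Sw be)) = M be y.
  by rewrite /M -mulrA (mulrA (st (Sw al))) SwK mul1r.
have -> : Sw al * st (Sw be) * (Sw be * y * st (Sw al)) = M al y.
  by rewrite /M !mulrA -(mulrA _ (st (Sw be))) SwK mulr1.
by move=> ->.
Qed.

Lemma ROT al a w : phi (M al (S a * w)) = phi (M (al ++ [:: a]) (w * S a)).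
Proof.
have -> : S a * w = \sum_j S a * (w * S j) * st (S j).
  by rewrite -[X in X = _]mulr1 -Hsum mulr_sumr; apply: eq_bigr => j _; rewrite !mulrA.
rewrite M_sum phi_sum (bigD1 a) //= big1 ?addr0.
  by rewrite M_cat M1 !mulrA.
by move=> j ja; rewrite G0 // eq_sym.
Qed.

Lemma ROTW p al q : phi (M al (Sw (p ++ q))) = phi (M (al ++ p) (Sw (q ++ p))).
Proof.
elim: p al q => [|a p IH] al q; first by rewrite /= !cats0.
rewrite cat_cons Sw_cons ROT.
have -> : Sw (p ++ q) * S a = Sw (p ++ (q ++ [:: a])) by rewrite catA [in RHS]Sw_cat Sw1.
by rewrite IH -!catA.
Qed.

Lemma Pval al : phi (M al 1) = (n%:R^-1) ^+ size al.
Proof.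
elim/last_ind: al => [|al j IH]; first by rewrite M_nil phi1 expr0.
have hn0 : (n%:R : C) != 0 by rewrite pnatr_eq0 -lt0n (leq_trans _ hn).
have E : forall k, phi (M (rcons al j) 1) = phi (M al (S k * st (S k))).
  move=> k; rewrite (@Msize _ (rcons al k)) ?size_rcons //.
  by rewrite -cats1 M_cat M1 mulr1.
have : phi (M al 1) = n%:R * phi (M (rcons al j) 1).
  rewrite -{1}Hsum M_sum phi_sum (eq_bigr (fun _ => phi (M (rcons al j) 1))).
    by rewrite sumr_const card_ord mulr_natl.
  by move=> k _; rewrite (E k).
rewrite IH size_rcons exprSr => h.
by rewrite h mulrAC mulfV // mul1r.
Qed.

Lemma iterROT p al : p != [::] -> forall m, exists be,
  (m <= size be)%N /\ phi (M al (Sw p)) = phi (M be (Sw p)).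
Proof.
move=> pn; elim=> [|m [be [hs he]]]; first by exists al.
exists (be ++ p); split.
  by rewrite size_cat -addn1 leq_add // lt0n size_eq0.
by rewrite he -{1}[p]cats0 ROTW.
Qed.

Lemma cpos k : 0 < (n%:R^-1 : C) ^+ k.
Proof. by rewrite exprn_gt0 // invr_gt0 ltr0n (leq_trans _ hn). Qed.

Lemma cle k m : (m <= k)%N -> (n%:R^-1 : C) ^+ k * (n%:R^-1) ^+ k <= (2^-1) ^+ m.
Proof.
move=> mk.
have h0 : (0 : C) <= n%:R^-1 by rewrite invr_ge0 ler0n.
have h1 : (n%:R^-1 : C) <= 2^-1.
  by rewrite lef_pV2 ?posrE ?ltr0n ?(leq_trans _ hn) // ler_nat.
have c1 : (n%:R^-1 : C) ^+ k <= 1.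
  by rewrite exprn_ile1 // (le_trans h1) // invf_le1 ?ltr0n // ler1n.
apply: le_trans (ler_piMr (ltW (cpos k)) c1) _.
apply: le_trans (@lerXn2r _ k _ _ _ _ h1) _; rewrite ?nnegrE ?invr_ge0 ?ler0n //.
by apply: ler_wiXn2l; rewrite ?invr_ge0 ?ler0n // invf_le1 ?ltr0n // ler1n.
Qed.

Lemma Vanish p al : p != [::] -> phi (M al (Sw p)) = 0.
Proof.
move=> pn; set z := phi (M al (Sw p)).
suff : z * z^* = 0 by move/eqP; rewrite mul_conjC_eq0 => /eqP.
apply: small0; first exact: mul_conjC_ge0.
move=> m; have [be [hs he]] := iterROT al pn m.
have E1 : M be (Sw p) = st (st (Sw be)) * (Sw p * st (Sw be)) by rewrite stK /M mulrA.
have E2 : st (st (Sw be)) * st (Sw be) = M be 1 by rewrite stK /M mulr1.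
have E3 : st (Sw p * st (Sw be)) * (Sw p * st (Sw be)) = M be 1.
  by rewrite stM stK /M mulr1 -!mulrA (mulrA (st (Sw p))) SwK mul1r.
have := @CS (st (Sw be)) (Sw p * st (Sw be)); rewrite -E1 E2 E3 Pval -he.
move=> /(_ (cpos _)) h; apply: le_trans h _.
exact: cle.
Qed.

Lemma VanishS p al : p != [::] -> phi (M al (st (Sw p))) = 0.
Proof.
move=> pn; have : M al (st (Sw p)) = st (M al (Sw p)) by rewrite /M !stM stK mulrA.
by move=> ->; rewrite phi_st Vanish // conjC0.
Qed.

Lemma VAL mu al nu : phi (M al (Sw mu * st (Sw nu))) =
  if mu == nu then (n%:R^-1) ^+ (size al + size mu) else 0.
Proof.
elim: mu al nu => [|a mu IH] al [|b nu].
- by rewrite Sw_nil st1 mulr1 Pval addn0.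
- by rewrite Sw_nil mul1r VanishS.
- by rewrite Sw_nil st1 mulr1 Vanish.
have E : Sw (a :: mu) * st (Sw (b :: nu)) = S a * (Sw mu * st (Sw nu)) * st (S b).
  by rewrite !Sw_cons stM !mulrA.
rewrite E eqseq_cons; have [<-|ab] := eqVneq a b; last by rewrite G0.
rewrite -M1 -M_cat IH size_cat /= addn1 addSnnS.
by [].
Qed.

Definition delta x := phi x - \sum_i phi (S i * x * st (S i)).

Lemma delta_word mu nu : delta (Sw mu * st (Sw nu)) = 0.
Proof.
rewrite /delta -{1}[_ * _]M_nil VAL.
rewrite (eq_bigr (fun i => phi (M [:: i] (Sw mu * st (Sw nu))))); last by move=> i _; rewrite M1.
rewrite (eq_bigr (fun i => if mu == nu then (n%:R^-1) ^+ (1 + size mu) else 0)); last first.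
  by move=> i _; rewrite VAL.
rewrite sumr_const card_ord /=; case: (mu == nu); last by rewrite mul0rn subrr.
have hn0 : (n%:R : C) != 0 by rewrite pnatr_eq0 -lt0n (leq_trans _ hn).
by rewrite add0n add1n exprS -mulrnAl -(mulr_natr (n%:R^-1)) mulVf // mul1r subrr.
Qed.

Definition cong a b := forall u v, phi (u * a * v) = phi (u * b * v).

Lemma delta_cong a b : cong a b -> delta a = delta b.
Proof.
move=> h; rewrite /delta.
have -> : phi a = phi b by have := h 1 1; rewrite !mul1r !mulr1.
by congr (_ - _); apply: eq_bigr => i _; rewrite h.
Qed.

Inductive mono : A -> Prop :=
| mono1 : mono 1
| monoS i a : mono a -> mono (S i * a)
| monoSt i a : mono a -> mono (st (S i) * a).

Lemma mono_cong a : mono a ->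
  cong a 0 \/ exists mu nu, cong a (Sw mu * st (Sw nu)).
Proof.
elim=> {a} [|i a _ [h|[mu [nu h]]]|i a _ [h|[mu [nu h]]]].
- by right; exists [::], [::]; rewrite Sw_nil st1 mulr1 => u v.
- by left=> u v; rewrite mulrA (h (u * S i) v) !mulr0 !mul0r.
- right; exists (i :: mu), nu=> u v.
  by rewrite mulrA (h (u * S i) v) Sw_cons !mulrA.
- by left=> u v; rewrite mulrA (h (u * st (S i)) v) !mulr0 !mul0r.
- case: mu h => [|j mu] h.
    right; exists [::], (nu ++ [:: i]) => u v.
    by rewrite mulrA (h (u * st (S i)) v) Sw_nil !mul1r stSw_cat Sw1 !mulrA.
  have [->|ij] := eqVneq i j.
    right; exists mu, nu => u v.
    by rewrite mulrA (h (u * st (S j)) v) Sw_cons !mulrA -(mulrA u) Hiso mulr1.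
  left=> u v; rewrite mulrA (h (u * st (S i)) v) Sw_cons !mulr0 !mul0r phi0.
  have -> : u * st (S i) * (S j * Sw mu * st (Sw nu)) * v =
            u * (st (S i) * S j) * (Sw mu * st (Sw nu) * v) by rewrite !mulrA.
  by rewrite zeroZ.
Qed.

Lemma delta0 : delta 0 = 0.
Proof.
rewrite /delta phi0 big1 ?subrr // => i _.
by rewrite mulr0 mul0r phi0.
Qed.

Lemma delta_mono a : mono a -> delta a = 0.
Proof.
case/mono_cong=> [h|[mu [nu h]]]; rewrite (delta_cong h) ?delta0 //.
exact: delta_word.
Qed.

Lemma mono_mul a b : mono a -> mono b -> mono (a * b).
Proof.
move=> ha hb; elim: ha => {a} [|i a _ IH|i a _ IH]; first by rewrite mul1r.
- by rewrite -mulrA; apply: monoS.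
- by rewrite -mulrA; apply: monoSt.
Qed.

Lemma mono_st a : mono a -> mono (st a).
Proof.
elim=> {a} [|i a _ IH|i a _ IH]; first by rewrite st1; exact: mono1.
- by rewrite stM; apply: mono_mul IH _; rewrite -[st _]mulr1; apply/monoSt/mono1.
- by rewrite stM stK; apply: mono_mul IH _; rewrite -[S _]mulr1; apply/monoS/mono1.
Qed.

Local Notation SP := (Defs.span mono).

Lemma SP_mono a : mono a -> SP a.
Proof. by move=> h; rewrite -[a]scale1r -[_ *: a]addr0; apply: spanS h (span0 _). Qed.

Lemma SP_add a b : SP a -> SP b -> SP (a + b).
Proof.
move=> ha hb; elim: ha => [|c w x hw _ IH]; first by rewrite add0r.
by rewrite -addrA; apply: spanS.
Qed.

Lemma SP_scale c a : SP a -> SP (c *: a).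
Proof.
elim=> [|d w x hw _ IH]; first by rewrite scaler0; exact: span0.
by rewrite scalerDr scalerA; apply: spanS.
Qed.

Lemma SP_mull w b : mono w -> SP b -> SP (w * b).
Proof.
move=> hw; elim=> [|d w' x hw' _ IH]; first by rewrite mulr0; exact: span0.
by rewrite mulrDr -scalerAr; apply: spanS => //; apply: mono_mul.
Qed.

Lemma SP_mul a b : SP a -> SP b -> SP (a * b).
Proof.
move=> ha hb; elim: ha => [|c w x hw _ IH]; first by rewrite mul0r; exact: span0.
rewrite mulrDl -scalerAl; apply: SP_add => //.
by apply: SP_scale; apply: SP_mull.
Qed.

Lemma SP_st a : SP a -> SP (st a).
Proof.
elim=> [|c w x hw _ IH]; first by rewrite st0; exact: span0.
by rewrite stD stZ; apply: spanS => //; apply: mono_st.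
Qed.

Lemma SP_gen a : star_subalg_gen st S a -> SP a.
Proof.
elim=> {a}.
- by move=> i; apply: SP_mono; rewrite -[S i]mulr1; apply/monoS/mono1.
- exact/SP_mono/mono1.
- by move=> a b _ ha _ hb; apply: SP_add.
- by move=> c a _ ha; apply: SP_scale.
- by move=> a b _ ha _ hb; apply: SP_mul.
- by move=> a _ ha; apply: SP_st.
Qed.

Lemma deltaD a b : delta (a + b) = delta a + delta b.
Proof.
rewrite /delta phiD.
rewrite (eq_bigr (fun i => phi (S i * a * st (S i)) + phi (S i * b * st (S i)))).
  by rewrite big_split /=; ring.
by move=> i _; rewrite mulrDr mulrDl phiD.
Qed.

Lemma deltaZ c a : delta (c *: a) = c * delta a.
Proof.
rewrite /delta phiZ mulrBr mulr_sumr; congr (_ - _); apply: eq_bigr => i _.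
by rewrite -scalerAr -scalerAl phiZ.
Qed.

Lemma delta_SP a : SP a -> delta a = 0.
Proof.
elim=> [|c w x hw _ IH]; first exact: delta0.
by rewrite deltaD deltaZ IH delta_mono // mulr0 addr0.
Qed.

Definition cr (t : R) : C := (t%:C)%C.
Lemma crD s t : cr (s + t) = cr s + cr t. Proof. exact: rmorphD. Qed.
Lemma crM s t : cr (s * t) = cr s * cr t. Proof. exact: rmorphM. Qed.
Lemma crN t : cr (- t) = - cr t. Proof. exact: rmorphN. Qed.
Lemma crB s t : cr (s - t) = cr s - cr t. Proof. exact: rmorphB. Qed.
Lemma cr0 : cr 0 = 0. Proof. exact: rmorph0. Qed.
Lemma cr1 : cr 1 = 1. Proof. exact: rmorph1. Qed.
Lemma crX t k : cr (t ^+ k) = cr t ^+ k. Proof. exact: rmorphXn. Qed.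
Lemma crV t : cr (t^-1) = (cr t)^-1. Proof. exact: fmorphV. Qed.
Lemma crn k : cr k%:R = k%:R. Proof. exact: rmorph_nat. Qed.
Lemma cr_le s t : (cr s <= cr t) = (s <= t). Proof. exact: lecR. Qed.
Lemma cr_lt s t : (cr s < cr t) = (s < t). Proof. exact: ltcR. Qed.
Lemma cr_conj t : (cr t)^* = cr t.
Proof. by apply: conj_Creal; apply/complex_realP; exists t. Qed.
Lemma cr_norm t : `|cr t| = cr `|t|.
Proof. by rewrite normc_def /= expr0n /= addr0 sqrtr_sqr. Qed.
Lemma cr_ge0E (z : C) : 0 <= z -> z = cr (complex.Re z).
Proof. by move=> hz; rewrite {1}[z]complexE (ger0_Im hz) mulr0 addr0. Qed.
Lemma cr_inj s t : cr s = cr t -> s = t.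
Proof. by case. Qed.

Definition nr a := complex.Re (nrm a).
Lemma nrmE a : nrm a = cr (nr a).
Proof. exact: cr_ge0E (nrm_ge0 HA a). Qed.
Lemma nr_ge0 a : 0 <= nr a.
Proof. by rewrite -cr_le cr0 -nrmE (nrm_ge0 HA a). Qed.
Lemma nr_tri a b : nr (a + b) <= nr a + nr b.
Proof. by rewrite -cr_le crD -!nrmE (nrm_triangle HA a b). Qed.
Lemma nr_mul a b : nr (a * b) <= nr a * nr b.
Proof. by rewrite -cr_le crM -!nrmE (nrm_submul HA a b). Qed.
Lemma nr_cstar a : nr (st a * a) = nr a ^+ 2.
Proof. by apply: cr_inj; rewrite crX -!nrmE (nrm_cstar HA a). Qed.
Lemma nr_eq0 a : nr a = 0 -> a = 0.
Proof. by move=> h; apply: (nrm_eq0 HA); rewrite nrmE h cr0. Qed.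
Lemma nr_scale t a : nr (cr t *: a) = `|t| * nr a.
Proof. by apply: cr_inj; rewrite crM -cr_norm -!nrmE (nrm_scale HA). Qed.
Lemma nr0 : nr 0 = 0.
Proof. by apply: cr_inj; rewrite -nrmE nrm0 cr0. Qed.
Lemma nrN a : nr (- a) = nr a.
Proof.
have -> : - a = cr (-1) *: a by rewrite crN cr1 scaleN1r.
by rewrite nr_scale normrN normr1 mul1r.
Qed.
Lemma nr_subC a b : nr (a - b) = nr (b - a).
Proof. by rewrite -nrN opprB. Qed.
Lemma nr_st a : nr (st a) = nr a.
Proof.
have key : forall b, nr b <= nr (st b).
  move=> b; have := nr_mul (st b) b; rewrite nr_cstar expr2.
  have [b0|bp] := eqVneq (nr b) 0; first by rewrite b0 nr_ge0.
  have bp' : 0 < nr b by rewrite lt_def bp nr_ge0.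
  by rewrite ler_pM2r.
by apply: le_anti; rewrite (key a) andbT; have := key (st a); rewrite stK.
Qed.

Lemma nr_complete (u : nat -> A) :
  (forall e : R, 0 < e -> exists N, forall m k, (N <= m)%N -> (N <= k)%N ->
        nr (u m - u k) < e) ->
  exists l, forall e : R, 0 < e -> exists N, forall m, (N <= m)%N -> nr (u m - l) < e.
Proof.
move=> hc.
have [l hl] : exists l, forall e : C, 0 < e -> exists N, forall m, (N <= m)%N ->
        nrm (u m - l) < e.
  apply: (nrm_complete HA) => e he.
  have ee : e = cr (complex.Re e) := cr_ge0E (ltW he).
  have rp : 0 < complex.Re e by rewrite -cr_lt cr0 -ee.
  have [N hN] := hc _ rp; exists N => m k hm hk; rewrite ee nrmE cr_lt; exact: hN.
exists l => e he.
have hce : 0 < cr e by rewrite -cr0 cr_lt.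
have [N hN] := hl (cr e) hce.
by exists N => m hm; rewrite -cr_lt -nrmE; apply: hN.
Qed.

Lemma nr_eps a : (forall e : R, 0 < e -> nr a < e) -> a = 0.
Proof.
move=> h; apply: nr_eq0; have [//|an] := eqVneq (nr a) 0.
have ap : 0 < nr a by rewrite lt_def an nr_ge0.
by have := h _ ap; rewrite ltxx.
Qed.

Lemma archR (e : R) : 0 < e -> exists N : nat, (2^-1)^+N < e.
Proof.
move=> he.
have hce : 0 < cr e by rewrite -cr0 cr_lt.
have [N hN] := archC hce; exists N.
by rewrite -cr_lt crX crV crn.
Qed.

Lemma le_eps (a b : R) : (forall d, 0 < d -> a <= b + d) -> a <= b.
Proof.
move=> h; rewrite leNgt; apply/negP => ab.
have hp : 0 < (a - b) / 2 by rewrite divr_gt0 // subr_gt0.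
have := h _ hp; lra.
Qed.

Definition c2 : C := cr (2^-1).
Fixpoint xs (h : A) (k : nat) : A :=
  if k is k'.+1 then c2 *: (h + xs h k' * xs h k') else 0.

Lemma nr_c2 a : nr (c2 *: a) = 2^-1 * nr a.
Proof. by rewrite nr_scale ger0_norm // invr_ge0 ler0n. Qed.

Lemma nr_B3 a b c : nr (a - c) <= nr (a - b) + nr (b - c).
Proof. by have := nr_tri (a - b) (b - c); rewrite addrA subrK. Qed.

Section Sqrt.
Variable h : A.
Hypothesis hsa : st h = h.
Hypothesis hn4 : nr h * 4 <= 3.
Local Notation x := (xs h).

Lemma xs_bd k : nr (x k) <= 2^-1.
Proof.
elim: k => [|k IH] /=; first by rewrite nr0 invr_ge0 ler0n.
rewrite nr_c2.
have h1 := nr_tri h (x k * x k); have h2 := nr_mul (x k) (x k).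
have h3 := nr_ge0 (x k); have h4 := nr_ge0 h.
have : nr (x k) * nr (x k) <= 2^-1 * 2^-1.
  by apply: ler_pM.
move=> h5.
move: (nr (h + x k * x k)) (nr (x k * x k)) (nr (x k)) (nr h) h1 h2 h3 h4 h5 (hn4) IH.
move=> a b c d h1 h2 h3 h4 h5 h6 IH.
lra.
Qed.

Lemma xs_sa k : st (x k) = x k.
Proof.
elim: k => [|k IH] /=; first exact: st0.
by rewrite stZ cr_conj stD stM IH hsa.
Qed.

Lemma xs_step k : nr (x k.+2 - x k.+1) <= 2^-1 * nr (x k.+1 - x k).
Proof.
have E : x k.+2 - x k.+1 =
   c2 *: (x k.+1 * (x k.+1 - x k) + (x k.+1 - x k) * x k).
  have -> : x k.+2 - x k.+1 = c2 *: ((h + x k.+1 * x k.+1) - (h + x k * x k)).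
    by rewrite scalerBr.
  congr (_ *: _).
  by rewrite opprD addrACA subrr add0r mulrBr mulrBl addrA subrK.
rewrite E nr_c2.
set d := nr (x k.+1 - x k).
have := nr_tri (x k.+1 * (x k.+1 - x k)) ((x k.+1 - x k) * x k).
have := nr_mul (x k.+1) (x k.+1 - x k).
have := nr_mul (x k.+1 - x k) (x k).
have := xs_bd k; have := xs_bd k.+1; have := nr_ge0 (x k); have := nr_ge0 (x k.+1).
have := nr_ge0 (x k.+1 - x k).
rewrite -/d.
move: (nr (_ + _)) (nr (x k.+1 * _)) (nr (_ * x k)) (nr (x k)) (nr (x k.+1)) => a b c p q.
nra.
Qed.

Lemma xs_d k : nr (x k.+1 - x k) <= (2^-1) ^+ k.
Proof.
elim: k => [|k IH].
  rewrite expr0 /= subr0 nr_c2 mul0r addr0.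
  have := nr_ge0 h; move: (nr h) (hn4) => a ha ha'; lra.
apply: le_trans (xs_step k) _.
by rewrite exprS; apply: ler_wpM2l => //; rewrite invr_ge0 ler0n.
Qed.

Lemma xs_tele k j : nr (x (k + j) - x k) <= 2 * (2^-1) ^+ k - 2 * (2^-1) ^+ (k + j).
Proof.
elim: j => [|j IH]; first by rewrite addn0 subrr nr0 subrr.
rewrite addnS.
have := nr_B3 (x (k + j).+1) (x (k + j)) (x k).
have := xs_d (k + j).
rewrite exprS.
move: (nr (x (k + j).+1 - x k)) (nr (x (k + j).+1 - x (k + j))) => a b.
move: ((2^-1 : R) ^+ (k + j)) IH => p IH.
lra.
Qed.

Lemma xs_cauchy : forall e : R, 0 < e -> exists N, forall m k, (N <= m)%N -> (N <= k)%N ->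
        nr (x m - x k) < e.
Proof.
move=> e he.
have he2 : 0 < e / 2 by rewrite divr_gt0.
have [N hN] := archR he2.
exists N.
have key : forall m k, (N <= k)%N -> (k <= m)%N -> nr (x m - x k) < e.
  move=> m k hk km.
  have := xs_tele k (m - k); rewrite subnKC //.
  have : (2^-1 : R) ^+ k <= (2^-1) ^+ N.
    by apply: ler_wiXn2l => //; rewrite ?invr_ge0 ?ler0n // invf_le1 ?ltr0n // ler1n.
  have : (0 : R) <= (2^-1) ^+ m by rewrite exprn_ge0 // invr_ge0 ler0n.
  move: ((2^-1 : R) ^+ k) ((2^-1 : R) ^+ N) ((2^-1 : R) ^+ m) hN => a b c hN.
  lra.
move=> m k hm hk; case: (leqP k m) => km; first exact: key.
by rewrite nr_subC; apply: key => //; apply: ltnW.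
Qed.

Lemma idq a b : (h + a * a) - (h + b * b) = a * (a - b) + (a - b) * b.
Proof. by rewrite opprD addrACA subrr add0r mulrBr mulrBl addrA subrK. Qed.

Lemma sqrt_pos : 0 <= phi (1 - h).
Proof.
have [l hl] := nr_complete xs_cauchy.
have lb : nr l <= 2^-1.
  apply: le_eps => d hd; have [N hN] := hl d hd; have := hN N (leqnn N).
  have := nr_B3 l (x N) 0; rewrite !subr0 nr_subC.
  have := xs_bd N.
  move: (nr l) (nr (x N)) (nr (x N - l)) => a b c; lra.
have e2 : 0 < 2^-1 :> R by rewrite invr_gt0 ltr0n.
have leq : l = c2 *: (h + l * l).
  apply/eqP; rewrite -subr_eq0; apply/eqP; apply: nr_eps => e he.
  have he2 : 0 < e / 2 by rewrite divr_gt0.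
  have [N hN] := hl _ he2.
  have E : l - c2 *: (h + l * l) = (l - x N.+1) + c2 *: (x N * (x N - l) + (x N - l) * l).
    by rewrite -idq scalerBr addrA subrK.
  rewrite E.
  have := nr_tri (l - x N.+1) (c2 *: (x N * (x N - l) + (x N - l) * l)).
  rewrite nr_c2 (nr_subC l).
  have := nr_tri (x N * (x N - l)) ((x N - l) * l).
  have := nr_mul (x N) (x N - l); have := nr_mul (x N - l) l.
  have := hN N (leqnn N); have := hN N.+1 (leqnSn N).
  have := xs_bd N; have := nr_ge0 (x N); have := nr_ge0 (x N - l); have := nr_ge0 l.
  move: (nr (_ - c2 *: _ + _)) (nr (x N * (x N - l) + (x N - l) * l)) (nr (x N * (x N - l)))
     (nr ((x N - l) * l)) (nr (x N)) (nr (x N - l)) (nr (x N.+1 - l)) (nr l) lb.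
  move=> a b c d p q r t lb.
  nra.
have sa : st l = l.
  apply/eqP; rewrite -subr_eq0; apply/eqP; apply: nr_eps => e he.
  have he2 : 0 < e / 2 by rewrite divr_gt0.
  have [N hN] := hl _ he2.
  have E : st l - l = st (l - x N) + (x N - l) by rewrite stB xs_sa addrA subrK.
  rewrite E; have := nr_tri (st (l - x N)) (x N - l); rewrite nr_st nr_subC.
  have := hN N (leqnn N).
  move: (nr (_ + _)) (nr (x N - l)) => a b; lra.
have ll : l + l = h + l * l.
  rewrite {1 2}leq -scalerDl.
  have -> : c2 + c2 = 1 by rewrite /c2 -crD -cr1; congr cr; field.
  by rewrite scale1r.
have -> : 1 - h = st (1 - l) * (1 - l).
  rewrite stB st1 sa mulrBr mulr1 mulrBl mul1r.
  have -> : h = l + l - l * l by rewrite ll addrK.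
  rewrite opprB opprD [in RHS]opprB addrACA; exact: addrA.
exact: phi_pos.
Qed.

End Sqrt.

Lemma phi_sa_bd h : st h = h -> phi h <= cr (2 * nr h).
Proof.
move=> hsa; have [h0|hn0] := eqVneq (nr h) 0.
  by rewrite (nr_eq0 h0) phi0 nr0 mulr0 cr0.
have hp : 0 < nr h by rewrite lt_def hn0 nr_ge0.
set t := (2 * nr h)^-1.
have tp : 0 < t by rewrite invr_gt0 mulr_gt0.
have hsa' : st (cr t *: h) = cr t *: h by rewrite stZ cr_conj hsa.
have hn4 : nr (cr t *: h) * 4 <= 3.
  rewrite nr_scale ger0_norm; last exact: ltW.
  have -> : t * nr h = 2^-1 by rewrite /t; field.
  lra.
have := sqrt_pos hsa' hn4; rewrite phiB phi1 phiZ subr_ge0 => H.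
have ctp : 0 < cr t by rewrite -cr0 cr_lt.
have -> : phi h = (cr t)^-1 * (cr t * phi h) by rewrite mulrA mulVf ?mul1r // gt_eqF.
apply: le_trans (ler_wpM2l _ H) _; first by rewrite invr_ge0 ltW.
by rewrite mulr1 -crV /t invrK.
Qed.

Lemma phi_bd a : `|phi a| <= cr (2 * nr a).
Proof.
have := @CS 1 a; rewrite st1 !mul1r phi1 ltr01 => /(_ isT).
rewrite -normCK mul1r => H.
have sa : st (st a * a) = st a * a by rewrite stM stK.
have H2 := phi_sa_bd sa.
rewrite nr_cstar in H2.
have H3 : `|phi a| ^+ 2 <= cr (2 * nr a) ^+ 2.
  apply: le_trans H (le_trans H2 _).
  rewrite -crX cr_le; have := nr_ge0 a; move: (nr a) => r r0; nra.
by rewrite -(@ler_pXn2r _ 2) ?nnegrE // -cr0 cr_le mulr_ge0 // nr_ge0.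
Qed.

Lemma nr1 : nr 1 <= 1.
Proof.
have := nr_cstar 1; rewrite st1 mulr1 => h.
have := nr_ge0 1; move: (nr 1) h => r h r0; nra.
Qed.

Lemma nrS i : nr (S i) <= 1.
Proof.
have := nr_cstar (S i); rewrite Hiso => h.
have := nr1; have := nr_ge0 (S i).
move: (nr 1) (nr (S i)) h => a b h h1 h2; nra.
Qed.

Lemma nr_conjS i w : nr (S i * w * st (S i)) <= nr w.
Proof.
have := nr_mul (S i * w) (st (S i)); have := nr_mul (S i) w.
rewrite nr_st; have := nrS i; have := nr_ge0 (S i); have := nr_ge0 w.
have := nr_ge0 (S i * w).
move: (nr (S i * w * _)) (nr (S i * w)) (nr (S i)) (nr w) => a b c d; nra.
Qed.

Lemma delta_bd w : `|delta w| <= cr (2 * nr w) * (n.+1)%:R.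
Proof.
rewrite /delta; apply: le_trans (ler_normB _ _) _.
apply: le_trans (lerD (phi_bd w) (ler_norm_sum _ _ _)) _.
have : \sum_(i < n) `|phi (S i * w * st (S i))| <= \sum_(i < n) cr (2 * nr w).
  apply: ler_sum => i _; apply: le_trans (phi_bd _) _.
  by rewrite cr_le ler_pM2l ?ltr0n // nr_conjS.
move=> H; apply: le_trans (lerD (lexx _) H) _.
by rewrite sumr_const card_ord (mulr_natr (cr (2 * nr w)) n.+1) (mulrS (cr (2 * nr w)) n).
Qed.

Lemma delta_all (Hgen : cstar_generated_by st nrm S) a : delta a = 0.
Proof.
suff : `|delta a| = 0 by move/eqP; rewrite normr_eq0 => /eqP.
have da := cr_ge0E (normr_ge0 (delta a)).
rewrite da; set r := complex.Re _ in da *.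
have r0 : 0 <= r by rewrite -cr_le cr0 -da normr_ge0.
suff : r <= 0.
  by move=> rle; have -> : r = 0 by apply: le_anti; rewrite rle r0.
apply: le_eps => d hd; rewrite add0r.
set K : R := 2 * (n.+1)%:R.
have Kp : 0 < K by rewrite mulr_gt0 ?ltr0n.
have ep : 0 < d / K by rewrite divr_gt0.
have cep : 0 < cr (d / K) by rewrite -cr0 cr_lt.
have [b [hb hab]] := Hgen a _ cep.
have db : delta b = 0 by apply: delta_SP; apply: SP_gen.
have E : delta a = delta (a - b).
  by have := deltaD (a - b) b; rewrite subrK db addr0. have := delta_bd (a - b); rewrite -E da.
rewrite -crn -crM cr_le; move: hab; rewrite nrmE cr_lt => hab.
have := nr_ge0 (a - b).
move: (nr (a - b)) hab => t hab t0 H.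
apply: le_trans H _.
have -> : d = 2 * (d / K) * (n.+1)%:R.
  by rewrite /K; field; rewrite addrC natr1 pnatr_eq0.
rewrite ler_pM2r ?ltr0n // ler_pM2l //; exact: ltW.
Qed.

Lemma main_sec (Hgen : cstar_generated_by st nrm S) :
  (forall x, phi (PhiN st S x) = phi x) /\
  (forall x y, phi (st y * PhiN st S x) = phi (st (PsiN st S y) * x)).
Proof.
have hn0 : (n%:R : C) != 0 by rewrite pnatr_eq0 -lt0n (leq_trans _ hn).
split.
  move=> x; rewrite /PhiN phi_sum.
  have := delta_all Hgen x; rewrite /delta => /eqP; rewrite subr_eq0 => /eqP ->.
  by [].
move=> x y.
have key : forall i, phi (st (S i) * st y * S i * x) = n%:R * phi (st y * (S i * x * st (S i))).
  move=> i; set z := st (S i) * st y * S i * x.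
  have := delta_all Hgen z; rewrite /delta => /eqP; rewrite subr_eq0 => /eqP ->.
  rewrite (eq_bigr (fun _ => phi (M [:: i] z))); last first.
    by move=> j _; rewrite -M1 (@Msize _ [:: i]).
  rewrite sumr_const card_ord M1 -(mulr_natl (phi (S i * z * st (S i))) n); congr (_ * _).
  have -> : S i * z * st (S i) = (S i * st (S i)) * (st y * S i * x * st (S i)).
    by rewrite /z !mulrA.
  have hF : in_Fn st nrm S (S i * st (S i)) by rewrite -Sw1; apply: Fn_in.
  rewrite -(Htr _ hF).
  by rewrite !mulrA -(mulrA _ (st (S i))) Hiso mulr1 -!mulrA.
rewrite /PsiN stZ st_sum -scalerAl phiZ mulr_suml phi_sum.
rewrite (eq_bigr (fun i => n%:R * phi (st y * (S i * x * st (S i))))); last first.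
  by move=> i _; rewrite !stM stK -key !mulrA.
rewrite -mulr_sumr mulrA geC0_conj ?invr_ge0 ?ler0n // mulVf // mul1r.
by rewrite mulr_sumr phi_sum.
Qed.

End Main.

Unset Implicit Arguments.
Set Strict Implicit.

Theorem mainTheorem5 (R : realType) (A : algType (complex R))
  (star : A -> A) (nrm : A -> complex R) (HA : is_cstar_algebra star nrm)
  (n : nat) (hn : (2 <= n)%N) (S : 'I_n -> A)
  (Hiso : forall i, star (S i) * S i = 1)
  (Hsum : \sum_(i < n) S i * star (S i) = 1)
  (Hgen : cstar_generated_by star nrm S)
  (phi : A -> complex R) (Hphi : is_state star phi)
  (Htr : forall a b, in_Fn star nrm S b -> phi (a * b) = phi (b * a)) :
  (forall x, phi (PhiN star S x) = phi x) /\
  (forall x y, phi (star y * PhiN star S x) = phi (star (PsiN star S y) * x)).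
Proof. exact: (main_sec HA hn Hiso Hsum Hphi Htr Hgen). Qed.
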